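(* Let $\vec B$ be a measurement assemblage on $\mathcal H$ and let $\rho_B$ be a density operator on $\mathcal H$ such that $\mathbb{SR}(\rho_B^{1/2}\vec B\rho_B^{1/2})=\mathbb{IR}(\vec B)=:t^*$. Then there exist a state assemblage $\vec\xi$ and a state assemblage $\vec\tau\in\mathbb{LHS}$, both with reduced state $\rho_B$ (i.e. $\sum_a\xi_{a|x}=\sum_a\tau_{a|x}=\rho_B$ for all $x$), such that $(\rho_B^{1/2}B_{a|x}\rho_B^{1/2}+t^*\xi_{a|x})/(1+t^* )=\tau_{a|x}$ for all $a,x$; i.e. $(t^*,\vec\xi,\vec\tau)$ is an optimal solution in the definition of $\mathbb{SR}(\rho_B^{1/2}\vec B\rho_B^{1/2})$ whose noise and LHS terms have the same reduced state as $\rho_B^{1/2}\vec B\rho_B^{1/2}$.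
   Context: All Hilbert spaces are finite-dimensional. A measurement assemblage (MA) on $\mathcal H$ is a family $\vec M=\{M_{a|x}\}_{a,x}$, with $x$ ranging over a finite input set and $a$ over a finite outcome set $\mathcal A$, such that for each $x$, $\{M_{a|x}\}_a$ is a POVM ($M_{a|x}\ge 0$, $\sum_a M_{a|x}=\mathbb 1$). $\vec M$ is jointly measurable, written $\vec M\in\mathbb{JM}$, if there exist a finite POVM $\{G_\lambda\}_\lambda$ and conditional probability distributions $p(a|x,\lambda)$ with $M_{a|x}=\sum_\lambda p(a|x,\lambda)G_\lambda$ for all $a,x$. A state assemblage (SA) on $\mathcal H$ is a family $\vec\sigma=\{\sigma_{a|x}\}_{a,x}$ of positive semidefinite operators such that $\sum_a\sigma_{a|x}=\rho$ is independent of $x$ and $\mathrm{tr}\rho=1$; $\rho$ is called its reduced state. $\vec\sigma$ admits a local hidden state model, written $\vec\sigma\in\mathbb{LHS}$, if $\sigma_{a|x}=\sum_\lambda p(\lambda)p(a|x,\lambda)\rho_\lambda$ for some finite probability distribution $p(\lambda)$, conditional distributions $p(a|x,\lambda)$ and density operators $\rho_\lambda$. The incompatibility robustness is $\mathbb{IR}(\vec M)=\min\{t\ge0:\exists$ MA $\vec N$ and $\vec D\in\mathbb{JM}$ with $(M_{a|x}+tN_{a|x})/(1+t)=D_{a|x}\ \forall a,x\}$. The steering robustness is $\mathbb{SR}(\vec\sigma)=\min\{t\ge0:\exists$ SA $\vec\xi$ and $\vec\tau\in\mathbb{LHS}$ with $(\sigma_{a|x}+t\xi_{a|x})/(1+t)=\tau_{a|x}\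 \forall a,x\}$. For a density operator $\rho$ and an MA $\vec B$ on the same space, $\rho^{1/2}\vec B\rho^{1/2}$ denotes the SA $\{\rho^{1/2}B_{a|x}\rho^{1/2}\}_{a,x}$, whose reduced state is $\rho$. *)

(* Defs.v *)
(* Finite-dimensional Hilbert space = C^d with C = R[i],
   R an arbitrary realType (a model of the real numbers). *)
From HB Require Import structures.
From mathcomp Require Import all_boot all_order all_algebra.
From mathcomp Require Import reals complex.
Set Implicit Arguments. Unset Strict Implicit. Unset Printing Implicit Defensive.
Import Order.TTheory GRing.Theory Num.Theory.
Local Open Scope ring_scope.
Local Open Scope complex_scope.

Section QDefs.
Variable R : realType.
Local Notation C := (R[i]).

Definition adj m n (A : 'M[C]_(m, n)) : 'M[C]_(n, m) := (map_mx Num.conj A)^T.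

Definition psd d (A : 'M[C]_d) : Prop :=
  A = adj A /\ forall v : 'cV[C]_d, 0 <= (adj v *m A *m v) 0 0.

Definition density d (rho : 'M[C]_d) : Prop := psd rho /\ \tr rho = 1.

Definition MA d nx na (M : 'I_nx -> 'I_na -> 'M[C]_d) : Prop :=
  (forall x a, psd (M x a)) /\ (forall x, \sum_a M x a = 1%:M).

(* conditional distribution p(a|x,l) stored as p x l a *)
Definition cond_distr nx k na (p : 'I_nx -> 'I_k -> 'I_na -> R) : Prop :=
  (forall x l a, 0 <= p x l a) /\ (forall x l, \sum_a p x l a = 1).

Definition JM d nx na (M : 'I_nx -> 'I_na -> 'M[C]_d) : Prop :=
  exists (k : nat) (G : 'I_k -> 'M[C]_d) (p : 'I_nx -> 'I_k -> 'I_na -> R),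
    [/\ (forall l, psd (G l)), \sum_l G l = 1%:M, cond_distr p &
        forall x a, M x a = \sum_l (p x l a)%:C *: G l].

Definition SA_with d nx na (sigma : 'I_nx -> 'I_na -> 'M[C]_d) (rho : 'M[C]_d) : Prop :=
  [/\ forall x a, psd (sigma x a), forall x, \sum_a sigma x a = rho & \tr rho = 1].

Definition SA d nx na (sigma : 'I_nx -> 'I_na -> 'M[C]_d) : Prop :=
  exists rho, SA_with sigma rho.

Definition is_LHS d nx na (sigma : 'I_nx -> 'I_na -> 'M[C]_d) : Prop :=
  exists (k : nat) (pl : 'I_k -> R) (p : 'I_nx -> 'I_k -> 'I_na -> R)
         (rhol : 'I_k -> 'M[C]_d),
    [/\ (forall l, 0 <= pl l), \sum_l pl l = 1, cond_distr p,
        (forall l, density (rhol l)) &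
        forall x a, sigma x a = \sum_l (pl l * p x l a)%:C *: rhol l].

Definition mixt d (t : R) (A B : 'M[C]_d) : 'M[C]_d :=
  ((1 + t)^-1)%:C *: (A + t%:C *: B).

Definition IR_feasible d nx na (M : 'I_nx -> 'I_na -> 'M[C]_d) (t : R) : Prop :=
  0 <= t /\ exists N D, [/\ MA N, JM D & forall x a, mixt t (M x a) (N x a) = D x a].

Definition is_IR d nx na (M : 'I_nx -> 'I_na -> 'M[C]_d) (t : R) : Prop :=
  IR_feasible M t /\ forall t', IR_feasible M t' -> t <= t'.

Definition SR_feasible d nx na (sigma : 'I_nx -> 'I_na -> 'M[C]_d) (t : R) : Prop :=
  0 <= t /\ exists xi tau,
    [/\ SA xi, SA tau, is_LHS tau & forall x a, mixt t (sigma x a) (xi x a) = tau x a].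

Definition is_SR d nx na (sigma : 'I_nx -> 'I_na -> 'M[C]_d) (t : R) : Prop :=
  SR_feasible sigma t /\ forall t', SR_feasible sigma t' -> t <= t'.

(* rho^{1/2} B rho^{1/2}, given S = rho^{1/2} *)
Definition sandwich d nx na (S : 'M[C]_d) (B : 'I_nx -> 'I_na -> 'M[C]_d) :
  'I_nx -> 'I_na -> 'M[C]_d := fun x a => S *m B x a *m S.

End QDefs.

(* Main.v *)
Require Import Defs.
From HB Require Import structures.
From mathcomp Require Import all_boot all_order all_algebra.
From mathcomp Require Import reals complex.
Import Order.TTheory GRing.Theory Num.Theory.
Local Open Scope ring_scope.
Local Open Scope complex_scope.
Section H.
Variable R : realType.
Local Notation C := (R[i]).

Lemma adjM m n p (A : 'M[C]_(m,n)) (B : 'M[C]_(n,p)) : adj (A *m B) = adj B *m adj A.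
Proof. by rewrite /adj map_mxM trmx_mul. Qed.

Lemma adjD m n (A B : 'M[C]_(m,n)) : adj (A + B) = adj A + adj B.
Proof. by rewrite /adj map_mxD linearD. Qed.

Lemma adjZ m n c (A : 'M[C]_(m,n)) : adj (c *: A) = (Num.conj c) *: adj A.
Proof. by rewrite /adj map_mxZ linearZ. Qed.

Lemma adj_delta m n i j : adj (delta_mx i j : 'M[C]_(m,n)) = delta_mx j i.
Proof.
apply/matrixP => k l; rewrite !mxE andbC.
by case: (_ && _); rewrite /= ?rmorph0 ?rmorph1.
Qed.

Lemma form_delta d (A : 'M[C]_d) i j : ((delta_mx 0 i : 'rV[C]_d) *m A *m (delta_mx j 0 : 'cV[C]_d)) 0 0 = A i j.
Proof. by rewrite -rowE -colE !mxE. Qed.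

Lemma form_delta2 d (A : 'M[C]_d) i j :
  \sum_k ((delta_mx 0 i : 'rV[C]_d) *m A) 0 k * (delta_mx j 0 : 'cV[C]_d) k 0 = A i j.
Proof. by rewrite -[RHS](@form_delta d A i j) mxE. Qed.

Lemma psd_diag d (A : 'M[C]_d) i : psd A -> 0 <= A i i.
Proof. by case=> _ H; have := H (delta_mx i 0); rewrite adj_delta form_delta. Qed.

Lemma psd_tr_ge0 d (A : 'M[C]_d) : psd A -> 0 <= \tr A.
Proof. by move=> hA; rewrite /mxtrace; apply: sumr_ge0 => i _; apply: psd_diag. Qed.

Lemma conj_realC (c : R) : Num.conj (c%:C) = c%:C.
Proof. exact: conjc_real. Qed.
Lemma psdD d (A B : 'M[C]_d) : psd A -> psd B -> psd (A + B).
Proof.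
case=> hA pA [hB pB]; split; first by rewrite adjD -hA -hB.
by move=> v; rewrite mulmxDr mulmxDl mxE addr_ge0.
Qed.

Lemma psdZ d (c : R) (A : 'M[C]_d) : 0 <= c -> psd A -> psd (c%:C *: A).
Proof.
move=> c0 [hA pA]; split; first by rewrite adjZ conj_realC -hA.
by move=> v; rewrite -scalemxAr -scalemxAl mxE mulr_ge0 // ler0c.
Qed.

Lemma psd_sand d (S X : 'M[C]_d) : psd S -> psd X -> psd (S *m X *m S).
Proof.
case=> hS _ [hX pX]; split; first by rewrite !adjM -hS -hX mulmxA.
by move=> v; have := pX (S *m v); rewrite adjM -hS !mulmxA.
Qed.

Lemma conjK' (x : C) : Num.conj (Num.conj x) = x.
Proof. exact: conjCK. Qed.

Lemma conjNconj (x : C) : Num.conj (- Num.conj x) = - x.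
Proof. rewrite (rmorphN Num.conj); congr (- _); exact: conjCK. Qed.

Lemma psd_tr0 d (A : 'M[C]_d) : psd A -> \tr A = 0 -> A = 0.
Proof.
move=> hA htr.
have diag0 i : A i i = 0.
  by apply: (psumr_eq0P _ htr) => // j _; apply: psd_diag.
have herm i j : A j i = Num.conj (A i j) by rewrite {1}hA.1 !mxE.
apply/matrixP => i j; rewrite mxE.
have [<-|ij] := eqVneq i j; first exact: diag0.
set a := A i j.
set c := - Num.conj a.
have := hA.2 (delta_mx i 0 + c *: delta_mx j 0).
rewrite adjD adjZ !adj_delta.
rewrite !(mulmxDl, mulmxDr) -!(scalemxAl, scalemxAr).
rewrite !mxE !form_delta2.
rewrite !diag0 herm -/a /c !(mulr0, addr0, add0r) conjNconj.
rewrite !mulNr -opprD oppr_ge0 => h2.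
have h2' : a * Num.conj a + a * Num.conj a <= 0 by rewrite [X in _ + X]mulrC.
have h3 : a * Num.conj a = 0.
  apply/eqP; rewrite eq_le mul_conjC_ge0 andbT.
  apply: le_trans h2'; by rewrite lerDl mul_conjC_ge0.
by apply/eqP; rewrite -mul_conjC_eq0 h3.
Qed.
Lemma sand_sum d n (S : 'M[C]_d) (M : 'I_n -> 'M[C]_d) :
  \sum_a S *m M a *m S = S *m (\sum_a M a) *m S.
Proof. by rewrite mulmx_sumr mulmx_suml. Qed.
End H.

Theorem mainTheorem2 (R : realType) (d nx na : nat)
    (B : 'I_nx -> 'I_na -> 'M[R[i]]_d) (rhoB S : 'M[R[i]]_d) (t : R) :
  MA B -> density rhoB ->
  psd S -> S *m S = rhoB ->
  is_SR (sandwich S B) t -> is_IR B t ->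
  exists xi tau : 'I_nx -> 'I_na -> 'M[R[i]]_d,
    [/\ SA_with xi rhoB, SA_with tau rhoB, is_LHS tau &
        (forall x a, mixt t (sandwich S B x a) (xi x a) = tau x a)].
Proof.
move=> hB hrho hS hSS _ [[t0 [N [D [hN hD hmix]]]] _].
have hD' := hD.
case: hD' => k [G [p [hG hsumG hp hDe]]].
have sumD x : \sum_a D x a = 1%:M.
  under eq_bigr => a _ do rewrite hDe.
  rewrite exchange_big /=.
  under eq_bigr => l _ do rewrite -scaler_suml -rmorph_sum (hp.2 x l) rmorph1 scale1r.
  exact: hsumG.
have psdD' x a : psd (D x a).
  rewrite -hmix /mixt; apply: psdZ; first by rewrite invr_ge0 addr_ge0.
  by apply: psdD; [exact: hB.1 | apply: psdZ => //; exact: hN.1].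
exists (sandwich S N), (sandwich S D); split.
- split => [x a|x|]; last exact: hrho.2.
    by apply: psd_sand => //; exact: hN.1.
  by rewrite /sandwich sand_sum hN.2 mulmx1 hSS.
- split => [x a|x|]; last exact: hrho.2.
    by apply: psd_sand => //; exact: psdD'.
  by rewrite /sandwich sand_sum sumD mulmx1 hSS.
- pose q l := \tr (S *m G l *m S).
  have hq l : 0 <= q l by apply: psd_tr_ge0; apply: psd_sand => //; exact: hG.
  pose pl l : R := complex.Re (q l).
  have hqpl l : q l = (pl l)%:C.
    rewrite /pl; have := ger0_Im (hq l); case: (q l) => u v /= ->; done.
  have hpl l : 0 <= pl l by have := hq l; rewrite hqpl ler0c.
  pose rhol l := if pl l == 0 then rhoB else ((pl l)^-1)%:C *: (S *m G l *m S).
  exists k, pl, p, rhol; split => //.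
  + apply: complexI; rewrite rmorph_sum rmorph1.
    transitivity (\sum_l q l); first by apply: eq_bigr => l _; rewrite hqpl.
    rewrite /q -linear_sum /= sand_sum hsumG mulmx1 hSS; exact: hrho.2.
  + move=> l; rewrite /rhol; case: eqP => [_|nz]; first exact: hrho.
    split; first by apply: psdZ; [rewrite invr_ge0 | apply: psd_sand].
    by rewrite mxtraceZ -/(q l) hqpl -rmorphM mulVf ?rmorph1 //; apply/eqP.
  + move=> x a; rewrite /sandwich hDe mulmx_sumr mulmx_suml.
    apply: eq_bigr => l _; rewrite -scalemxAr -scalemxAl /rhol.
    case: eqP => [pl0|nz].
      have -> : S *m G l *m S = 0.
        apply: psd_tr0; first by apply: psd_sand.
        by rewrite -/(q l) hqpl pl0.
      by rewrite pl0 mul0r rmorph0 scale0r scaler0.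
    by rewrite scalerA -rmorphM mulrAC mulfV ?mul1r //; apply/eqP.
- move=> x a; rewrite /sandwich -hmix /mixt.
  rewrite -scalemxAr -scalemxAl mulmxDr mulmxDl -scalemxAr -scalemxAl.
  by [].
Qed.
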